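(* Let $\mathcal C\subseteq\mathbf F_q^n$ be a formally self-orthogonal nonzero linear $[n,k,d]$ code with $2d\le n+1$. Write $p_i=\dim\mathcal P_i$ and $f_i=\dim\mathcal F_i$. Then for all $0\le i\le j\le n$, $$(p_j-p_i)+(f_i-f_j)\le j-i.$$ As a consequence, $\Delta[\mathcal C]\le\lfloor (n-2d+2)/2\rfloor$.
   Context: The coordinate order is fixed. Define $\mathcal P_0=\mathcal F_n=0$, $\mathcal P_n=\mathcal F_0=\mathcal C$, and for $1\le i\le n-1$, $\mathcal P_i=\{(c_1,\dots,c_i):(c_1,\dots,c_i,0,\dots,0)\in\mathcal C\}$ and $\mathcal F_i=\{(c_{i+1},\dots,c_n):(0,\dots,0,c_{i+1},\dots,c_n)\in\mathcal C\}$. $\mathcal C$ is formally self-orthogonal if there is an $n$-tuple $\mathbf x$ of nonzero elements of $\mathbf F_q$ with $\mathcal C\subseteq\mathbf x*\mathcal C^\perp$, where $*$ is coordinate-wise multiplication. Set $\Delta_i=p_i+f_i$ and $\Delta(\mathcal C)=\min_{0\le i\le n}\Delta_i$. Then $\Delta[\mathcal C]$ is the maximum of $\Delta(\mathcal C')$ over all codes $\mathcal C'$ obtained from $\mathcal C$ by permuting coordinates. *)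

(* Defs.v *)
From HB Require Import structures.
From mathcomp Require Import all_boot all_order all_algebra all_fingroup.
Set Implicit Arguments. Unset Strict Implicit. Unset Printing Implicit Defensive.
Import GRing.Theory.
Local Open Scope ring_scope.

Section Codes.
Variables (F : finFieldType) (n : nat).
Implicit Types (C : {vspace 'rV[F]_n}) (c x y : 'rV[F]_n).

Definition wt c : nat := #|[set j : 'I_n | c 0 j != 0]|.

Definition is_min_dist C (d : nat) : Prop :=
  (exists2 c, c \in C & (c != 0) && (wt c == d)) /\
  (forall c, c \in C -> c != 0 -> (d <= wt c)%N).

Definition dot x y : F := \sum_(j < n) x 0 j * y 0 j.
Definition in_dual C y : Prop := forall c, c \in C -> dot c y = 0.

Definition cwmul x y : 'rV[F]_n := \row_j (x 0 j * y 0 j).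

Definition formally_self_orthogonal C : Prop :=
  exists2 x : 'rV[F]_n, (forall j, x 0 j != 0) &
    forall c, c \in C -> exists2 y, in_dual C y & c = cwmul x y.

(* embedding F^i -> F^n : (c_1..c_i) |-> (c_1,..,c_i,0,..,0) *)
Definition prefix_mx (i : nat) : 'M[F]_(i, n) :=
  \matrix_(a < i, b < n) ((val a == val b)%N)%:R.
(* embedding F^(n-i) -> F^n : (c_{i+1}..c_n) |-> (0,..,0,c_{i+1},..,c_n) *)
Definition suffix_mx (i : nat) : 'M[F]_(n - i, n) :=
  \matrix_(a < n - i, b < n) ((i + val a == val b)%N)%:R.

Definition Pcode C (i : nat) : {vspace 'rV[F]_i} :=
  (linfun (mulmxr (prefix_mx i)) @^-1: C)%VS.
Definition Fcode C (i : nat) : {vspace 'rV[F]_(n - i)} :=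
  (linfun (mulmxr (suffix_mx i)) @^-1: C)%VS.

Definition pdim C i : nat := \dim (Pcode C i).
Definition fdim C i : nat := \dim (Fcode C i).

Definition Delta C : nat :=
  \big[minn/(pdim C 0 + fdim C 0)%N]_(i < n.+1) (pdim C i + fdim C i)%N.

Definition permute_code C (s : 'S_n) : {vspace 'rV[F]_n} :=
  (linfun (mulmxr (perm_mx s)) @: C)%VS.

Definition DeltaMax C : nat := \max_(s : 'S_n) Delta (permute_code C s).

End Codes.

(* Main.v *)
Require Import Defs.
From HB Require Import structures.
From mathcomp Require Import all_boot all_order all_algebra all_fingroup.
From mathcomp Require Import zify.
Set Implicit Arguments. Unset Strict Implicit. Unset Printing Implicit Defensive.
Import GRing.Theory Num.Theory.
Local Open Scope ring_scope.

Section Helpers.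
Variables (F : finFieldType) (n : nat).

Definition prefL i : 'Hom('rV[F]_i, 'rV[F]_n) := linfun (mulmxr (prefix_mx F n i)).
Definition sufL i : 'Hom('rV[F]_(n - i), 'rV[F]_n) := linfun (mulmxr (suffix_mx F n i)).

Lemma prefix_in i (u : 'rV[F]_i) (a : 'I_i) (b : 'I_n) :
  val a = val b -> (prefL i u) 0 b = u 0 a.
Proof.
move=> ab; rewrite lfunE /= mxE (bigD1 a) //= mxE ab eqxx mulr1 big1 ?addr0 //.
move=> a' ne; rewrite mxE; case: eqP; rewrite ?mulr0 // => e.
by case/eqP: ne; apply: val_inj; rewrite /= e ab.
Qed.

Lemma prefix_out i (u : 'rV[F]_i) (b : 'I_n) :
  (i <= b)%N -> (prefL i u) 0 b = 0.
Proof.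
move=> ib; rewrite lfunE /= mxE big1 // => a _; rewrite mxE; case: eqP; rewrite ?mulr0 //.
move=> e; exfalso; change (nat_of_ord a = nat_of_ord b) in e; have := ltn_ord a; lia.
Qed.

Lemma suffix_in i (u : 'rV[F]_(n - i)) (a : 'I_(n - i)) (b : 'I_n) :
  (i + val a)%N = val b -> (sufL i u) 0 b = u 0 a.
Proof.
move=> ab; rewrite lfunE /= mxE (bigD1 a) //= mxE ab eqxx mulr1 big1 ?addr0 //.
move=> a' ne; rewrite mxE; case: eqP; rewrite ?mulr0 // => e.
by case/eqP: ne; apply: val_inj; move: e ab; rewrite /= => e ab; lia.
Qed.

Lemma suffix_out i (u : 'rV[F]_(n - i)) (b : 'I_n) :
  (b < i)%N -> (sufL i u) 0 b = 0.
Proof.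
move=> ib; rewrite lfunE /= mxE big1 // => a _; rewrite mxE; case: eqP; rewrite ?mulr0 //.
by move=> e; exfalso; change (i + nat_of_ord a = nat_of_ord b)%N in e; lia.
Qed.

Lemma pre_supp i v : v \in limg (prefL i) -> forall k : 'I_n, (i <= k)%N -> v 0 k = 0.
Proof. by case/memv_imgP => u _ -> k ik; apply: prefix_out. Qed.

Lemma suf_supp i v : v \in limg (sufL i) -> forall k : 'I_n, (k < i)%N -> v 0 k = 0.
Proof. by case/memv_imgP => u _ -> k ik; apply: suffix_out. Qed.

Lemma supp_pre i (hi : (i <= n)%N) (v : 'rV[F]_n) :
  (forall k : 'I_n, (i <= k)%N -> v 0 k = 0) -> v \in limg (prefL i).
Proof.
move=> H; apply/memv_imgP; exists (\row_(a < i) v 0 (widen_ord hi a)); first exact: memvf.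
apply/rowP => b; case: (ltnP b i) => bi.
  by rewrite (@prefix_in _ _ (Ordinal bi)) // mxE; congr (v 0 _); apply: val_inj.
by rewrite prefix_out // H.
Qed.

Lemma sufP i (a : 'I_(n - i)) : (i + a < n)%N.
Proof. have := ltn_ord a; lia. Qed.

Lemma supp_suf i (v : 'rV[F]_n) :
  (forall k : 'I_n, (k < i)%N -> v 0 k = 0) -> v \in limg (sufL i).
Proof.
move=> H; apply/memv_imgP; exists (\row_(a < n - i) v 0 (Ordinal (sufP a))); first exact: memvf.
apply/rowP => b; case: (ltnP b i) => bi.
  by rewrite suffix_out // H.
have bl : (b - i < n - i)%N by have := ltn_ord b; lia.
rewrite (@suffix_in _ _ (Ordinal bl)) /=; last by lia.
by rewrite mxE; congr (v 0 _); apply: val_inj => /=; lia.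
Qed.

Lemma prefL_inj i : (i <= n)%N -> lker (prefL i) = 0%VS.
Proof.
move=> hi; apply/eqP/lker0P => u1 u2 e; apply/rowP => a.
by rewrite -(@prefix_in _ _ a (widen_ord hi a)) // e (@prefix_in _ _ a).
Qed.

Lemma sufL_inj i : lker (sufL i) = 0%VS.
Proof.
apply/eqP/lker0P => u1 u2 e; apply/rowP => a.
by rewrite -(@suffix_in _ _ a (Ordinal (sufP a))) // e (@suffix_in _ _ a).
Qed.

Lemma dim_preim (aT rT : vectType F) (f : 'Hom(aT, rT)) (U : {vspace rT}) :
  lker f = 0%VS -> \dim (f @^-1: U) = \dim (U :&: limg f).
Proof.
move=> k0; rewrite -(@limg_dim_eq _ _ _ f); last by rewrite k0 capv0.
by rewrite -lpreim_cap_limg lpreimK // capvSr.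
Qed.

Lemma pdimE (C : {vspace 'rV[F]_n}) i : (i <= n)%N -> pdim C i = \dim (C :&: limg (prefL i)).
Proof. by move=> hi; rewrite /pdim /Pcode dim_preim // prefL_inj. Qed.

Lemma fdimE (C : {vspace 'rV[F]_n}) i : fdim C i = \dim (C :&: limg (sufL i)).
Proof. by rewrite /fdim /Fcode dim_preim // sufL_inj. Qed.

Lemma dim_pre i : (i <= n)%N -> \dim (limg (prefL i)) = i.
Proof.
move=> hi; rewrite limg_dim_eq; last by rewrite prefL_inj // capv0.
by rewrite dimvf dim_matrix; lia.
Qed.

Lemma dim_suf i : \dim (limg (sufL i)) = (n - i)%N.
Proof.
rewrite limg_dim_eq; last by rewrite sufL_inj // capv0.
by rewrite dimvf dim_matrix; lia.
Qed.

End Helpers.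

Section Ortho.
Variables (F : finFieldType) (n : nat).

Definition bmx (U : {vspace 'rV[F]_n}) : 'M[F]_(\dim U, n) :=
  \matrix_(t < \dim U) (vbasis U)`_t.

Lemma bmx_rank U : \rank (bmx U) = \dim U.
Proof.
apply/eqP; apply: inj_row_free => v.
rewrite mulmx_sum_row => H; apply/rowP => t; rewrite mxE.
move/freeP: (basis_free (vbasisP U)) => /(_ (fun t => v 0 t)); apply.
by rewrite -[RHS]H; apply: eq_bigr => s _; rewrite rowK.
Qed.

Lemma bmx_mem (U : {vspace 'rV[F]_n}) (t : 'I_(\dim U)) : (vbasis U)`_t \in U.
Proof. by apply: vbasis_mem; apply: mem_nth; rewrite size_tuple. Qed.

Lemma ortho_dim (U V : {vspace 'rV[F]_n}) :
  (forall u v, u \in U -> v \in V -> \sum_k u 0 k * v 0 k = 0) ->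
  (\dim U + \dim V <= n)%N.
Proof.
move=> H.
have M0 : bmx U *m (bmx V)^T = 0.
  apply/matrixP => s t; rewrite !mxE -[RHS](H _ _ (bmx_mem s) (bmx_mem t)).
  by apply: eq_bigr => k _; rewrite !mxE.
have : (\rank (bmx U) <= \rank (kermx (bmx V)^T))%N.
  by apply: mxrankS; rewrite sub_kermx M0.
rewrite mxrank_ker mxrank_tr !bmx_rank.
have := rank_leq_col (bmx V); rewrite bmx_rank; lia.
Qed.

Definition dmul (w : 'rV[F]_n) : 'End('rV[F]_n) := linfun (mulmxr (diag_mx w)).

Lemma dmulE w v k : (dmul w v) 0 k = v 0 k * w 0 k.
Proof. by rewrite lfunE /= mul_mx_diag mxE. Qed.

End Ortho.

Section Part1.
Variables (F : finFieldType) (n : nat).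

Lemma entry0 k : (0 : 'rV[F]_n) 0 k = 0. Proof. by rewrite mxE. Qed.
Lemma entryD (x y : 'rV[F]_n) k : (x + y) 0 k = x 0 k + y 0 k. Proof. by rewrite mxE. Qed.

Lemma part1 (D : {vspace 'rV[F]_n}) (z : 'rV[F]_n) :
  (forall k, z 0 k != 0) ->
  (forall a b, a \in D -> b \in D -> \sum_k a 0 k * b 0 k * z 0 k = 0) ->
  forall i j, (i <= j)%N -> (j <= n)%N ->
  (pdim D j + fdim D i <= pdim D i + fdim D j + (j - i))%N.
Proof.
move=> zn Hz i j ij jn.
have iN : (i <= n)%N by apply: leq_trans jn.
rewrite !pdimE // !fdimE.
pose w : 'rV[F]_n := \row_k ((i <= k) && (k < j))%N%:R.
pose wz : 'rV[F]_n := \row_k (w 0 k * z 0 k).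
have wE k : w 0 k = ((i <= k) && (k < j))%N%:R by rewrite mxE.
have wzE k : wz 0 k = w 0 k * z 0 k by rewrite mxE.
pose pi := dmul w; pose sg := dmul wz.
have h1 : (\dim (D :&: limg (prefL F n j)) <= \dim (D :&: limg (prefL F n i))
             + \dim (pi @: (D :&: limg (prefL F n j))))%N.
  rewrite -(limg_ker_dim pi (D :&: limg (prefL F n j))) leq_add2r; apply: dimvS.
  apply/subvP => v; rewrite !memv_cap memv_ker => /andP[/andP[vD vP] /eqP pv].
  rewrite vD /=; apply: (supp_pre iN) => k ik; case: (ltnP k j) => kj.
    by have := congr1 (fun m : 'rV[F]_n => m 0 k) pv; rewrite dmulE wE ik kj mulr1 entry0.
  by move: (pre_supp vP kj).
have h2 : (\dim (D :&: limg (sufL F n i)) <= \dim (D :&: limg (sufL F n j))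
             + \dim (sg @: (D :&: limg (sufL F n i))))%N.
  rewrite -(limg_ker_dim sg (D :&: limg (sufL F n i))) leq_add2r; apply: dimvS.
  apply/subvP => v; rewrite !memv_cap memv_ker => /andP[/andP[vD vS] /eqP pv].
  rewrite vD /=; apply: supp_suf => // k kj; case: (ltnP k i) => ki.
    by move: (suf_supp vS ki).
  have := congr1 (fun m : 'rV[F]_n => m 0 k) pv; rewrite dmulE wzE wE ki kj mul1r entry0.
  by move/eqP; rewrite mulf_eq0 (negbTE (zn k)) orbF => /eqP.
have h3 := @ortho_dim F n (pi @: (D :&: limg (prefL F n j))) (sg @: (D :&: limg (sufL F n i)) + lker pi).
have h3' : (\dim (pi @: (D :&: limg (prefL F n j))) + \dim (sg @: (D :&: limg (sufL F n i)) + lker pi) <= n)%N.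
  apply: h3 => u x /memv_imgP[a aA ->] /memv_addP[y /memv_imgP[b bB ->] [o oK ->]].
  move: aA bB; rewrite !memv_cap => /andP[aD aP] /andP[bD bS].
  move: oK; rewrite memv_ker => /eqP oK.
  rewrite -[RHS](Hz a b aD bD); apply: eq_bigr => k _.
  have ok : o 0 k * w 0 k = 0 by have := congr1 (fun m : 'rV[F]_n => m 0 k) oK; rewrite dmulE entry0.
  rewrite entryD !dmulE wzE mulrDr; move: ok; rewrite wE.
  case: (ltnP k i) => ki /=.
    by rewrite (suf_supp bS ki) !mulr0 !mul0r addr0.
  case: (ltnP k j) => kj /=.
    by rewrite !mulr1 mul1r => ->; rewrite mulr0 addr0 mulrA.
  by rewrite (pre_supp aP kj) !mul0r addr0.
have h4 : \dim (sg @: (D :&: limg (sufL F n i)) + lker pi) =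
          (\dim (sg @: (D :&: limg (sufL F n i))) + \dim (lker pi))%N.
  apply: dimv_disjoint_sum; apply/eqP; rewrite -subv0; apply/subvP => x.
  rewrite memv_cap memv0 => /andP[/memv_imgP[b _ ->] xk]; rewrite memv_ker in xk.
  apply/eqP/rowP => k; rewrite entry0.
  have := congr1 (fun m : 'rV[F]_n => m 0 k) (eqP xk); rewrite !dmulE entry0 wzE wE.
  by case: (_ && _); rewrite /= ?mulr1 ?mul0r ?mulr0.
have h5 : \dim (limg (prefL F n i) + limg (sufL F n j)) = (i + (n - j))%N.
  rewrite dimv_disjoint_sum ?dim_pre ?dim_suf //.
  apply/eqP; rewrite -subv0; apply/subvP => v; rewrite memv_cap memv0 => /andP[vp vs].
  apply/eqP/rowP => k; rewrite entry0; case: (ltnP k i) => ki.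
    by apply: (suf_supp vs); apply: leq_trans ij.
  by move: (pre_supp vp ki).
have h6 : (\dim (limg (prefL F n i) + limg (sufL F n j)) <= \dim (lker pi))%N.
  apply: dimvS; apply/subvP => v /memv_addP[p pP [s sS ->]].
  rewrite memv_ker; apply/eqP/rowP => k; rewrite dmulE entryD entry0 wE.
    case: (ltnP k i) => ki /=; first by rewrite mulr0.
    rewrite (pre_supp pP ki) add0r.
    case: (ltnP k j) => kj /=; first by rewrite (suf_supp sS kj) mul0r.
    by rewrite mulr0.
lia.
Qed.

End Part1.

Section Part2.
Variables (F : finFieldType) (n : nat).

Lemma wt0 (c : 'rV[F]_n) : wt c = 0%N -> c = 0.
Proof.
rewrite /wt => /eqP; rewrite cards_eq0 => /eqP H; apply/rowP => k; rewrite mxE.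
have : k \notin [set k | c 0 k != 0] by rewrite H in_set0.
by rewrite inE negbK => /eqP.
Qed.

Lemma wt_pre i (hi : (i <= n)%N) (v : 'rV[F]_n) : v \in limg (prefL F n i) -> (wt v <= i)%N.
Proof.
move=> vP; rewrite /wt.
apply: (@leq_trans #|[set widen_ord hi a | a in 'I_i]|); last first.
  by apply: leq_trans (leq_imset_card _ _) _; rewrite card_ord.
apply: subset_leq_card; apply/subsetP => k; rewrite inE => nz.
have ki : (k < i)%N.
  by rewrite ltnNge; apply/negP => ik; move: nz; rewrite (pre_supp vP ik) eqxx.
by apply/imsetP; exists (Ordinal ki) => //; apply: val_inj.
Qed.

Lemma wt_suf i (v : 'rV[F]_n) : v \in limg (sufL F n i) -> (wt v <= n - i)%N.
Proof.
move=> vP; rewrite /wt.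
apply: (@leq_trans #|[set (Ordinal (sufP a) : 'I_n) | a in 'I_(n - i)]|); last first.
  by apply: leq_trans (leq_imset_card _ _) _; rewrite card_ord.
apply: subset_leq_card; apply/subsetP => k; rewrite inE => nz.
have ik : (i <= k)%N.
  by rewrite leqNgt; apply/negP => ik; move: nz; rewrite (suf_supp vP ik) eqxx.
have kl : (k - i < n - i)%N by have := ltn_ord k; lia.
by apply/imsetP; exists (Ordinal kl) => //; apply: val_inj => /=; lia.
Qed.

Lemma dim0 (U : {vspace 'rV[F]_n}) : (forall v, v \in U -> v = 0) -> \dim U = 0%N.
Proof.
move=> H; apply/eqP; rewrite dimv_eq0 -subv0; apply/subvP => v vU.
by rewrite memv0 (H v vU).
Qed.

Lemma bigmin_le x m : forall (G : nat -> nat) k, (k < m)%N ->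
  (\big[minn/x]_(i < m) G i <= G k)%N.
Proof.
elim: m => [|m IH] // G k km; rewrite big_ord_recl /=.
case: k km => [|k] km; first exact: geq_minl.
apply: leq_trans (geq_minr _ _) _.
exact: (IH (fun i => G i.+1) k).
Qed.

Lemma Delta_le (D : {vspace 'rV[F]_n}) k : (k <= n)%N -> (Delta D <= pdim D k + fdim D k)%N.
Proof. by move=> kn; rewrite /Delta; apply: (bigmin_le _ (fun i => pdim D i + fdim D i)). Qed.

Lemma Delta_bound (D : {vspace 'rV[F]_n}) (z : 'rV[F]_n) d :
  (forall k, z 0 k != 0) ->
  (forall a b, a \in D -> b \in D -> \sum_k a 0 k * b 0 k * z 0 k = 0) ->
  (forall v, v \in D -> v != 0 -> (d <= wt v)%N) ->
  (1 <= d)%N -> (2 * d <= n + 1)%N ->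
  (Delta D <= (n + 2 - 2 * d) %/ 2)%N.
Proof.
move=> zn Hz Hw d1 dn.
have hi : (d - 1 <= n)%N by lia.
have hj : (n - d + 1 <= n)%N by lia.
have p0 : pdim D (d - 1) = 0%N.
  rewrite pdimE //; apply: dim0 => v; rewrite memv_cap => /andP[vD vP].
  apply/eqP; apply/negP => /negP nz; have := Hw v vD nz; have := wt_pre hi vP; lia.
have f0 : fdim D (n - d + 1) = 0%N.
  rewrite fdimE //; apply: dim0 => v; rewrite memv_cap => /andP[vD vP].
  apply/eqP; apply/negP => /negP nz; have := Hw v vD nz; have := wt_suf vP; lia.
have e1 := Delta_le D hi; have e2 := Delta_le D hj.
have e3 := part1 zn Hz (_ : (d - 1 <= n - d + 1)%N) hj.
have {}e3 := e3 ltac:(lia).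
rewrite leq_divRL //; lia.
Qed.

End Part2.

Lemma fso_ortho (F : finFieldType) n (C : {vspace 'rV[F]_n}) :
  formally_self_orthogonal C ->
  exists z : 'rV[F]_n, (forall k, z 0 k != 0) /\
    (forall a b, a \in C -> b \in C -> \sum_k a 0 k * b 0 k * z 0 k = 0).
Proof.
case=> x xn H; exists (\row_k (x 0 k)^-1); split.
  by move=> k; rewrite mxE invr_eq0.
move=> a b aC bC; have [y yd ->] := H b bC.
rewrite -[RHS](yd a aC) /dot; apply: eq_bigr => k _; rewrite !mxE.
by rewrite -mulrA; congr (_ * _); rewrite mulrAC divff // mul1r.
Qed.

Lemma perm_entry (F : finFieldType) n (s : 'S_n) (a : 'rV[F]_n) k :
  (a *m perm_mx s) 0 k = a 0 (s^-1 k)%g.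
Proof. by rewrite -[s]invgK -col_permE mxE invgK. Qed.

Lemma perm_mem (F : finFieldType) n (C : {vspace 'rV[F]_n}) (s : 'S_n) v :
  v \in permute_code C s -> exists2 a, a \in C & v = a *m perm_mx s.
Proof. by case/memv_imgP => a aC ->; exists a => //; rewrite lfunE. Qed.

Lemma wt_perm (F : finFieldType) n (s : 'S_n) (a : 'rV[F]_n) :
  wt (a *m perm_mx s) = wt a.
Proof.
rewrite /wt -(@card_preimset _ (s^-1)%g [set k | a 0 k != 0] (@perm_inj _ _)).
by apply: eq_card => k; rewrite !inE perm_entry.
Qed.

Unset Implicit Arguments.
Set Strict Implicit.

Theorem proposition4p4 (F : finFieldType) (n d : nat) (C : {vspace 'rV[F]_n}) :
  C != 0%VS ->
  formally_self_orthogonal C ->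
  is_min_dist C d ->
  (2 * d <= n + 1)%N ->
  (forall i j : nat, (i <= j)%N -> (j <= n)%N ->
     ((pdim C j)%:Z - (pdim C i)%:Z) + ((fdim C i)%:Z - (fdim C j)%:Z)
       <= j%:Z - i%:Z)
  /\ (DeltaMax C <= (n + 2 - 2 * d) %/ 2)%N.
Proof.
move=> _ fso [[c0 c0C /andP[c0n /eqP wc0]] md] dn.
have [z [zn Hz]] := fso_ortho fso.
split.
  move=> i j ij jn; have := part1 zn Hz ij jn; lia.
have d1 : (1 <= d)%N.
  case: d wc0 {md dn} => // /wt0 e; by rewrite e eqxx in c0n.
apply/bigmax_leqP => s _.
apply: (@Delta_bound F n _ (\row_k z 0 (s^-1 k)%g)).
- by move=> k; rewrite mxE.
- move=> a' b' /perm_mem[a aC ->] /perm_mem[b bC ->].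
  rewrite -[RHS](Hz a b aC bC) (reindex_inj (@perm_inj _ s)) /=.
  by apply: eq_bigr => k _; rewrite !perm_entry mxE permK.
- move=> v /perm_mem[a aC ->] nz.
  have anz : a != 0 by apply: contraNneq nz => ->; rewrite mul0mx.
  rewrite wt_perm; exact: md.
- exact: d1.
- exact: dn.
Qed.
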